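(* Let $V$ be an $\mathcal{H}$-module vertex algebra. Set $L_1^{+}V=\sum_{n\ge1}L_1^{(n)}V$ and $L_{-1}^{+}V=\sum_{n\ge1}L_{-1}^{(n)}V$ (both $\mathbb{Z}$-graded subspaces of $V$), and denote by $(\cdot)_0$ their degree-zero parts. Then $(L_{-1}^{+}V)_0\subset (L_1^{+}V)_0$.
   Context: Throughout, $\mathbb{F}$ is an algebraically closed field of odd prime characteristic $p$; vertex algebras are over $\mathbb{F}$. Every vertex algebra $V$ is a module for the bialgebra $\mathcal{B}$ with basis $\{\mathcal{D}^{(n)}\}_{n\in\mathbb{N}}$, $\mathcal{D}^{(m)}\mathcal{D}^{(n)}=\binom{m+n}{n}\mathcal{D}^{(m+n)}$, via $\mathcal{D}^{(n)}v=v_{-n-1}\mathbf{1}$. $\mathcal{H}$: let $\mathfrak{sl}_2$ over $\mathbb{C}$ have basis $L_{-1},L_0,L_1$ with $[L_1,L_{-1}]=2L_0$, $[L_0,L_{\pm1}]=\mp L_{\pm1}$; put $L_{\pm1}^{(n)}=L_{\pm1}^n/n!$, $L_0^{(n)}=\binom{-2L_0}{n}$ in $U(\mathfrak{sl}_2)$; $U(\mathfrak{sl}_2)_{\mathbb{Z}}$ is the $\mathbb{Z}$-span of the $L_{-1}^{(i)}L_0^{(j)}L_1^{(k)}$, and $\mathcal{H}=\mathbb{F}\otimes_{\mathbb{Z}}U(\mathfrak{sl}_2)_{\mathbb{Z}}$. $e^{zL_{\pm1}}=\sum_{n\ge0}z^nL_{\pm1}^{(n)}$. For $v$ homogeneous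 of degree $n$, $f(z)^{\deg}v:=f(z)^nv$, extended linearly. A $\mathbb{Z}$-graded vertex algebra: $V=\bigoplus V_n$, $\mathbf{1}\in V_0$, $u_rV_n\subset V_{m+n-r-1}$ for $u\in V_m$. A $\mathbb{Z}$-graded weight $\mathcal{H}$-module: $W=\bigoplus W_n$ with $\mathcal{H}$-action, $L_{\pm1}^{(r)}W_n\subset W_{n\mp r}$, $L_0^{(r)}|_{W_n}=\binom{-2n}{r}$. An $\mathcal{H}$-module vertex algebra: a $\mathbb{Z}$-graded vertex algebra $V$ which is a $\mathbb{Z}$-graded weight $\mathcal{H}$-module with $L_{-1}^{(n)}=\mathcal{D}^{(n)}$, such that $V_n=0$ for $n\ll0$, $L_1^{(n)}\mathbf{1}=\delta_{n,0}\mathbf{1}$, and $e^{zL_1}Y(v,z_0)e^{-zL_1}=Y\bigl(e^{z(1-zz_0)L_1}(1-zz_0)^{-2\deg}v,z_0/(1-zz_0)\bigr)$ for $v\in V$. *)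

(* Defs.v *)
From HB Require Import structures.
From mathcomp Require Import all_boot all_order all_algebra.
Set Implicit Arguments. Unset Strict Implicit. Unset Printing Implicit Defensive.
Import Order.TTheory GRing.Theory Num.Theory.
Local Open Scope ring_scope.

(* Generalized binomial coefficient binom(a, s) for a : int, s : nat,
   i.e. a(a-1)...(a-s+1)/s!, as an integer.  For a = -(k+1) (Negz k):
   binom(-(k+1), s) = (-1)^s C(k+s, s). *)
Definition binz (a : int) (s : nat) : int :=
  match a with
  | Posz n => ('C(n, s))%:Z
  | Negz k => (-1) ^+ s * ('C(k + s, s))%:Z
  end.

Section HModuleVA.
Variables (F : fieldType) (V : lmodType F).
(* one  : the vacuum vector 1
   vop u n w : the component u_n w of Y(u,z)w = sum_n u_n w z^{-n-1}
   pi n : projection of V onto the homogeneous component V_n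
          (so v \in V_n iff pi n v = v)
   L1 r : the action of L_1^{(r)} *)
Variables (one : V) (vop : V -> int -> V -> V) (pi : int -> V -> V)
          (L1 : nat -> V -> V).

(* D^{(n)} v = v_{-n-1} 1 ; this is also the action of L_{-1}^{(n)} *)
Definition Dn (n : nat) (v : V) : V := vop v (- (n%:Z) - 1) one.

Record H_module_VA : Prop := {
  vop_linl : forall (a : F) u u' n w,
      vop (a *: u + u') n w = a *: vop u n w + vop u' n w;
  vop_linr : forall (a : F) u n w w',
      vop u n (a *: w + w') = a *: vop u n w + vop u n w';
  vop_trunc : forall u w, exists N : int, forall n, N <= n -> vop u n w = 0;
  vop_vacuum : forall n v, vop one n v = if n == -1 then v else 0;
  vop_creation : forall v,
      vop v (-1) one = v /\ (forall n : int, 0 <= n -> vop v n one = 0);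
  (* Borcherds (Jacobi) identity in components; sums are finite by
     truncation, so we require equality of all sufficiently long partial
     sums. *)
  vop_borcherds : forall u v w (l m n : int), exists N : nat, forall K : nat,
      (N <= K)%N ->
      \sum_(i < K) (binz m i)%:~R *: vop (vop u (l + i%:Z) v) (m + n - i%:Z) w =
      \sum_(i < K) ((-1) ^+ i * binz l i)%:~R *:
         (vop u (l + m - i%:Z) (vop v (n + i%:Z) w)
          - (-1) ^+ `|l|%N *: vop v (l + n - i%:Z) (vop u (m + i%:Z) w));
  pi_lin : forall n (a : F) u v, pi n (a *: u + v) = a *: pi n u + pi n v;
  pi_orth : forall m n v, pi m (pi n v) = if m == n then pi n v else 0;
  pi_fin : forall v, exists s : seq int,
      [/\ uniq s, v = \sum_(n <- s) pi n v & forall n, n \notin s -> pi n v = 0];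
  one_deg : pi 0 one = one;
  vop_deg : forall u w (m n r : int), pi m u = u -> pi n w = w ->
      pi (m + n - r - 1) (vop u r w) = vop u r w;
  deg_bounded_below : exists N : int, forall n v, n < N -> pi n v = 0;
  L1_lin : forall r (a : F) u v, L1 r (a *: u + v) = a *: L1 r u + L1 r v;
  L1_0 : forall v, L1 0 v = v;
  L1_divpow : forall a b v, L1 a (L1 b v) = ('C(a + b, b))%:R *: L1 (a + b) v;
  D_divpow : forall a b v, Dn a (Dn b v) = ('C(a + b, b))%:R *: Dn (a + b) v;
  L1_deg : forall (n : int) r v, pi n v = v -> pi (n - r%:Z) (L1 r v) = L1 r v;
  D_deg : forall (n : int) r v, pi n v = v -> pi (n + r%:Z) (Dn r v) = Dn r v;
  (* commutation relation of H on the weight space V_n, where L_0^{(r)}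
     acts by binom(-2n, r):
     L_1^{(a)} L_{-1}^{(b)} = sum_j (-1)^j binom(-2n+a-b, j)
                                    L_{-1}^{(b-j)} L_1^{(a-j)} *)
  H_comm : forall (n : int) a b v, pi n v = v ->
      L1 a (Dn b v) =
      \sum_(j < (minn a b).+1)
         ((-1) ^+ j * binz (- 2 * n + a%:Z - b%:Z) j)%:~R *:
            Dn (b - j) (L1 (a - j) v);
  L1_one : forall n, L1 n one = if n == 0%N then one else 0;
  (* e^{zL_1} Y(v,z0) e^{-zL_1} w
       = Y(e^{z(1-z z0)L_1}(1-z z0)^{-2 deg} v, z0/(1-z z0)) w,
     for homogeneous v of degree d, compared coefficientwise at
     z^k z0^{-n-1} (binomials expanded in nonnegative powers of z z0). *)
  L1_conj : forall (d : int) v w (k : nat) (n : int), pi d v = v ->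
      \sum_(i < k.+1) (-1) ^+ (k - i) *: L1 i (vop v n (L1 (k - i) w)) =
      \sum_(s < k.+1) ((-1) ^+ s * binz (k%:Z - 2 * d + n + 1) s)%:~R *:
         vop (L1 (k - s) v) (n + s%:Z) w
}.

Definition in_L1plus (x : V) : Prop :=
  exists s : seq (nat * V),
    all (fun q => (0 < q.1)%N) s /\ x = \sum_(q <- s) L1 q.1 q.2.

Definition in_Lm1plus (x : V) : Prop :=
  exists s : seq (nat * V),
    all (fun q => (0 < q.1)%N) s /\ x = \sum_(q <- s) Dn q.1 q.2.

End HModuleVA.

(* Main.v *)
Require Import Defs.
From HB Require Import structures.
From mathcomp Require Import all_boot all_order all_algebra.
Import GRing.Theory.
Local Open Scope ring_scope.
Set Implicit Arguments. Unset Strict Implicit.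

Section L.
Lemma lin0 (F : fieldType) (V : lmodType F) (f : V -> V)
  (hf : forall (a : F) u v, f (a *: u + v) = a *: f u + f v) : f 0 = 0.
Proof.
have := hf 1 0 0. rewrite scaler0 addr0 scale1r => h.
by apply: (@addrI _ (f 0)); rewrite addr0 -{1}h.
Qed.
Lemma linD (F : fieldType) (V : lmodType F) (f : V -> V)
  (hf : forall (a : F) u v, f (a *: u + v) = a *: f u + f v) u v : f (u + v) = f u + f v.
Proof. by have := hf 1 u v; rewrite !scale1r. Qed.
Lemma linZ (F : fieldType) (V : lmodType F) (f : V -> V)
  (hf : forall (a : F) u v, f (a *: u + v) = a *: f u + f v) a u : f (a *: u) = a *: f u.
Proof. by have := hf a u 0; rewrite !addr0 (lin0 hf) addr0. Qed.
Lemma linB (F : fieldType) (V : lmodType F) (f : V -> V)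
  (hf : forall (a : F) u v, f (a *: u + v) = a *: f u + f v) u v : f (u - v) = f u - f v.
Proof. by rewrite linD // -scaleN1r linZ // scaleN1r. Qed.
Lemma linS (F : fieldType) (V : lmodType F) (f : V -> V)
  (hf : forall (a : F) u v, f (a *: u + v) = a *: f u + f v) (I : Type) (r : seq I) (g : I -> V) :
  f (\sum_(i <- r) g i) = \sum_(i <- r) f (g i).
Proof.
elim: r => [|x r IH]; first by rewrite !big_nil (lin0 hf).
by rewrite !big_cons linD // IH.
Qed.
End L.

Lemma L1p0 (F : fieldType) (V : lmodType F) (L1 : nat -> V -> V) : in_L1plus L1 0.
Proof. by exists [::]; rewrite big_nil. Qed.
Lemma L1pD (F : fieldType) (V : lmodType F) (L1 : nat -> V -> V) x y :
  in_L1plus L1 x -> in_L1plus L1 y -> in_L1plus L1 (x + y).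
Proof.
move=> [s [hs ->]] [t [ht ->]]; exists (s ++ t); split; first by rewrite all_cat hs ht.
by rewrite big_cat.
Qed.
Lemma L1pZ (F : fieldType) (V : lmodType F) (L1 : nat -> V -> V)
  (hL : forall r (a : F) u v, L1 r (a *: u + v) = a *: L1 r u + L1 r v) a x :
  in_L1plus L1 x -> in_L1plus L1 (a *: x).
Proof.
move=> [s [hs ->]]; exists (map (fun q => (q.1, a *: q.2)) s); split.
  by rewrite all_map.
rewrite big_map scaler_sumr; apply: eq_bigr => q _ /=; by rewrite (linZ (hL _)).
Qed.
Lemma L1pB (F : fieldType) (V : lmodType F) (L1 : nat -> V -> V)
  (hL : forall r (a : F) u v, L1 r (a *: u + v) = a *: L1 r u + L1 r v) x y :
  in_L1plus L1 x -> in_L1plus L1 y -> in_L1plus L1 (x - y).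
Proof. move=> hx hy; apply: L1pD => //; rewrite -scaleN1r; exact: L1pZ. Qed.
Lemma L1pS (F : fieldType) (V : lmodType F) (L1 : nat -> V -> V)
  (hL : forall r (a : F) u v, L1 r (a *: u + v) = a *: L1 r u + L1 r v)
  (I : eqType) (r : seq I) (g : I -> V) :
  (forall i, i \in r -> in_L1plus L1 (g i)) -> in_L1plus L1 (\sum_(i <- r) g i).
Proof.
elim: r => [|x r IH] h; first by rewrite big_nil; apply: L1p0.
rewrite big_cons; apply: L1pD; first by apply: h; rewrite inE eqxx.
by apply: IH => i hi; apply: h; rewrite inE hi orbT.
Qed.
Lemma L1p1 (F : fieldType) (V : lmodType F) (L1 : nat -> V -> V) r v :
  (0 < r)%N -> in_L1plus L1 (L1 r v).
Proof. by move=> hr; exists [:: (r, v)]; rewrite /= hr big_seq1. Qed.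

From mathcomp Require Import zify.

Theorem lemma4p9 (F : closedFieldType) (p : nat) (hp : prime p) (hodd : odd p)
    (hchar : p \in [pchar F]) (V : lmodType F) (one : V)
    (vop : V -> int -> V -> V) (pi : int -> V -> V) (L1 : nat -> V -> V)
    (HV : H_module_VA one vop pi L1) :
  forall x : V, pi 0 x = x -> in_Lm1plus one vop x -> in_L1plus L1 x.
Proof.
case: HV => vop_linl _ _ _ _ _ pi_lin pi_orth pi_fin _ _ [N hN] L1_lin L1_0 _ _ L1_deg D_deg H_comm _ _.
have Dlin : forall b (a : F) u v, Dn one vop b (a *: u + v) = a *: Dn one vop b u + Dn one vop b v.
  by move=> b a u v; rewrite /Dn vop_linl.
have key : forall (b : nat) y, pi 0 (Dn one vop b y) = Dn one vop b (pi (- b%:Z) y).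
  move=> b y; have [s [us ey hs]] := pi_fin y.
  rewrite {1}ey (linS (Dlin b)) (linS (pi_lin 0)).
  transitivity (\sum_(n <- s) (if n == - b%:Z then Dn one vop b (pi n y) else 0)).
    apply: eq_bigr => n _.
    have hd : pi (n + b%:Z) (Dn one vop b (pi n y)) = Dn one vop b (pi n y).
      by apply: D_deg; rewrite pi_orth eqxx.
    rewrite -{1}hd pi_orth.
    have -> : (0 == n + b%:Z) = (n == - b%:Z) by rewrite eq_sym addr_eq0.
    by case: ifP.
  case: (boolP (- b%:Z \in s)) => h.
    rewrite (big_rem (- b%:Z) h) eqxx big1_seq ?Monoid.mulm1 // => i /andP[_ hi].
    case: eqP => // ei; by rewrite ei mem_rem_uniqF in hi.
  rewrite big1_seq; last first.
    move=> i /andP[_ hi]; case: eqP => // ei; by rewrite -ei hi in h.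
  by rewrite hs // (lin0 (Dlin b)).
have Q : forall m : nat, forall b : nat, (0 < b)%N -> - N < b%:Z + m%:Z ->
    forall v, pi (- b%:Z) v = v -> in_L1plus L1 (Dn one vop b v).
  elim=> [|m IH] b hb hbN v hv.
    rewrite -hv hN ?(lin0 (Dlin b)); first exact: L1p0.
    lia.
  have hc := H_comm (- b%:Z) b (b + b)%N v hv.
  have e2 : (- 2 * - b%:Z + b%:Z - (b + b)%N%:Z) = b%:Z by lia.
  rewrite e2 in hc.
  move: hc. rewrite (_ : minn b (b + b) = b); last by lia.
  move=> hc. rewrite big_ord_recr /= in hc.
  rewrite binn mulr1 subnn L1_0 addnK in hc.
  set c : F := ((-1) ^+ b)%:~R in hc.
  have hcc : c * c = 1.
    by rewrite /c -intrM -exprMn mulrNN mulr1 expr1n.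
  have -> : Dn one vop b v = c *: (L1 b (Dn one vop (b + b) v) - \sum_(i < b)
       ((-1) ^+ i * ('C(b, i))%:Z)%:~R *: Dn one vop (b + b - i) (L1 (b - i)%N v)).
    by rewrite hc addrAC subrr add0r scalerA hcc scale1r.
  apply: L1pZ => //; apply: L1pB => //; first exact: L1p1.
  apply: L1pS => // i _; apply: L1pZ => //.
  have hi := ltn_ord i.
  apply: IH; [lia | lia | ].
  have -> : - (b + b - i)%N%:Z = - b%:Z - (b - i)%N%:Z by lia.
  by apply: L1_deg.
move=> x hx [s [hs ex]].
rewrite -hx ex (linS (pi_lin 0)); apply: L1pS => // q hq.
rewrite key; apply: (Q `|N|%N); first by move/allP: hs => /(_ q hq).
  move/allP: hs => /(_ q hq) h1; lia.
by rewrite pi_orth eqxx.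
Qed.
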